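(* Let $l:\Phi\rightarrow\mathbb{K}^{\succ 1}\setminus\{0\}$ be a map. Then $l$ extends to a series morphism on $\Gamma$ (i.e. for every anti-well-ordered subset $E\subseteq\Phi$ the family $(l(\phi))_{\phi\in E}$ is summable, so that $l(\alpha):=\sum_{\phi\in\operatorname{supp}\alpha}\alpha_\phi\, l(\phi)$ is defined for every $\alpha=\prod_{\phi\in\operatorname{supp}\alpha}\phi^{\alpha_\phi}\in\Gamma$) if and only if the following condition fails: (HL1) there exist a strictly decreasing sequence $(\phi_n)_{n\in\mathbb{N}}\subseteq\Phi$ and an increasing sequence $(\lambda^{(n)})_{n\in\mathbb{N}}\subseteq\Gamma$ such that $\lambda^{(n)}\in\operatorname{Supp} l(\phi_n)$ for every $n$. Moreover, such an extension $l:\Gamma\to\mathbb{K}^{\succ1}$ is a pre-logarithmic section if and only if for all $\phi\prec\psi$ in $\Phi$ one has $0<l(\phi)<l(\psi)$. Moreover, such a pre-logarithmic section $l$ satisfies the Growth Axiom (GA) if and only if $\mathrm{LF}(l(\phi))\prec\phi$ for every $\phi\in\Phi$.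
   Context: Let $(\Phi,\preccurlyeq)$ be a totally ordered set. The Hahn group $\mathbf{H}(\Phi)$ is the set of formal products $\gamma=\prod_{\phi\in\operatorname{supp}\gamma}\phi^{\gamma_\phi}$ with real exponents $\gamma_\phi$, whose support $\operatorname{supp}\gamma=\{\phi:\gamma_\phi\neq 0\}$ is anti-well-ordered (every nonempty subset has a greatest element); multiplication is pointwise on exponents and the order is anti-lexicographic: $\gamma\succ 1$ iff $\gamma\neq1$ and the exponent of $\max\operatorname{supp}\gamma$ is positive. Each $\phi\in\Phi$ is identified with $\phi^1$ (so $\phi\succ 1$). Fix a subgroup $\Gamma$ of $\mathbf{H}(\Phi)$ containing $\Phi$; elements of $\Phi$ are called fundamental monomials, $\Gamma^{\succ1}=\{\gamma\in\Gamma:\gamma\succ1\}$. For $1\neq\gamma\in\Gamma$, $\mathrm{LF}(\gamma)=\max\operatorname{supp}\gamma$ and $\mathrm{LE}(\gamma)=\gamma_{\mathrm{LF}(\gamma)}$. $\mathbb{K}=\mathbb{R}((\Gamma))$ is the field of formal series $a=\sum a_\alpha\alpha$ ($a_\alpha\in\mathbb{R}$) with anti-well-ordered support $\operatorname{Supp} a=\{\alpha\in\Gamma: a_\alpha\neq0\}$. For $a\neq 0$: $\mathrm{LM}(a)=\max\operatorname{Supp}a$, $\mathrm{LC}(a)=a_{\mathrm{LM}(a)}$, $\mathrm{LF}(a)=\mathrm{LF}(\mathrm{LM}(a))$; $a\prec b$ means $\mathrm{LM}(a)\prec\mathrm{LM}(b)$. $\mathbb{K}$ is ordered by: $a>0$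 iff $\mathrm{LC}(a)>0$. $\mathbb{K}^{\succ1}$ is the set of series with support in $\Gamma^{\succ 1}$. A family $(a_i)_{i\in I}$ in $\mathbb{K}$ is summable if $\bigcup_i\operatorname{Supp}a_i$ is anti-well-ordered and each $\alpha$ lies in $\operatorname{Supp}a_i$ for only finitely many $i$; its sum is then the series whose coefficient at $\alpha$ is $\sum_i a_{i,\alpha}$. A pre-logarithmic section is an embedding of ordered groups $l:(\Gamma,\cdot,\preccurlyeq)\to(\mathbb{K}^{\succ 1},+,\leq)$. (GA) means: $l(\alpha)\prec\alpha$ for all $\alpha\in\Gamma^{\succ 1}$. *)

(* Defs.v *)
From HB Require Import structures.
From mathcomp Require Import all_boot all_order all_algebra.
From mathcomp Require Import boolp classical_sets functions cardinality fsbigop reals.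
Set Implicit Arguments. Unset Strict Implicit. Unset Printing Implicit Defensive.
Import Order.TTheory GRing.Theory Num.Theory.
Local Open Scope ring_scope.
Local Open Scope classical_set_scope.

Section Hahn.
Context {dP : Order.disp_t} (Phi : orderType dP) (R : realType).

Definition awo {T : Type} (le : T -> T -> Prop) (A : set T) : Prop :=
  forall B : set T, B `<=` A -> B !=set0 -> exists2 b, B b & forall x, B x -> le x b.

(* Elements of H(Phi) are represented by their exponent functions gamma : Phi -> R;
   the group product is pointwise addition of exponents, the unit is 0. *)
Definition monom := Phi -> R.
Definition msupp (g : monom) : set Phi := [set phi | g phi <> 0].
Definition mdiv (b a : monom) : monom := fun phi => b phi - a phi.
Definition fund (phi : Phi) : monom := fun psi => if psi == phi then 1 else 0.

Definition is_LF (g : monom) (phi : Phi) : Prop :=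
  g phi <> 0 /\ forall psi, g psi <> 0 -> (psi <= phi)%O.

Definition mgt1 (g : monom) : Prop := exists phi, is_LF g phi /\ 0 < g phi.
Definition mlt (a b : monom) : Prop := mgt1 (mdiv b a).
Definition mle (a b : monom) : Prop := a = b \/ mlt a b.

Definition hahn_subgroup (Gam : set monom) : Prop :=
  (forall g, Gam g -> awo (fun x y => (x <= y)%O) (msupp g)) /\
  Gam (fun _ => 0) /\
  (forall a b, Gam a -> Gam b -> Gam (mdiv a b)) /\
  (forall phi, Gam (fund phi)).

Definition series := monom -> R.
Definition Supp (a : series) : set monom := [set m | a m <> 0].
Definition is_series (Gam : set monom) (a : series) : Prop :=
  Supp a `<=` Gam /\ awo mle (Supp a).
Definition in_Kgt1 (Gam : set monom) (a : series) : Prop :=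
  is_series Gam a /\ Supp a `<=` mgt1.

Definition is_LM (a : series) (mu : monom) : Prop :=
  a mu <> 0 /\ forall nu, a nu <> 0 -> mle nu mu.
Definition spos (a : series) : Prop := exists mu, is_LM a mu /\ 0 < a mu.
Definition slt (a b : series) : Prop := spos (fun m => b m - a m).
Definition sle (a b : series) : Prop := a = b \/ slt a b.
Definition sprec (a b : series) : Prop :=
  exists ma mb, is_LM a ma /\ is_LM b mb /\ mlt ma mb.

Definition summable {I : Type} (E : set I) (a : I -> series) : Prop :=
  awo mle [set m | exists2 i, E i & a i m <> 0] /\
  forall m, finite_set [set i | E i /\ a i m <> 0].

Definition extends_series_morphism (l : Phi -> series) : Prop :=
  forall E : set Phi, awo (fun x y => (x <= y)%O) E -> summable E l.

Definition lext (l : Phi -> series) (alpha : monom) : series :=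
  fun m => \sum_(phi \in msupp alpha) (alpha phi * l phi m).

Definition HL1 (Gam : set monom) (l : Phi -> series) : Prop :=
  exists (phin : nat -> Phi) (lam : nat -> monom),
    (forall n, (phin n.+1 < phin n)%O) /\
    (forall n, mle (lam n) (lam n.+1)) /\
    (forall n, Gam (lam n) /\ l (phin n) (lam n) <> 0).

Definition prelog_section (Gam : set monom) (L : monom -> series) : Prop :=
  (forall a, Gam a -> in_Kgt1 Gam (L a)) /\
  (forall a b, Gam a -> Gam b -> L (fun phi => a phi + b phi) = (fun m => L a m + L b m)) /\
  (forall a b, Gam a -> Gam b -> L a = L b -> a = b) /\
  (forall a b, Gam a -> Gam b -> mle a b -> sle (L a) (L b)).

Definition GA (Gam : set monom) (L : monom -> series) : Prop :=
  forall a, Gam a -> mgt1 a -> exists mu, is_LM (L a) mu /\ mlt mu a.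

End Hahn.

(* Main.v *)
Require Import Defs.
From HB Require Import structures.
From mathcomp Require Import all_boot all_order all_algebra.
From mathcomp Require Import boolp classical_sets functions cardinality fsbigop reals.
Import Order.TTheory GRing.Theory Num.Theory.
Local Open Scope ring_scope.
Local Open Scope classical_set_scope.
Set Implicit Arguments. Unset Strict Implicit. Unset Printing Implicit Defensive.
Lemma inj_infinite T (A : set T) (f : nat -> T) :
  (forall n, A (f n)) -> injective f -> infinite_set A.
Proof.
elim/Ppointed: T => T in A f *; first by move=> _ _; case: (no (f 0%N)).
move=> Af finj; apply/infiniteP.
have /Pinj[h hE] : {in setT &, injective f} by move=> i j _ _ /finj.
have/injPfun[i _] : {homo h : x / setT x >-> A x} by move=> n _; rewrite -hE.
by apply/pcard_leP; squash i.
Qed.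

Lemma infinite_inj T (A : set T) : infinite_set A ->
  exists f : nat -> T, (forall n, A (f n)) /\ injective f.
Proof.
elim/Ppointed: T => T in A *; first by move=> /infinite_setN0 [x]; case: (no x).
move=> /infiniteP/pcard_leP[f]; exists (f : nat -> T); split.
  by move=> n; apply: funS.
by move=> i j; apply: (@inj _ _ _ f); rewrite ?in_setT.
Qed.
Section Mon.
Context {dP : Order.disp_t} (Phi : orderType dP) (R : realType).
Implicit Types (a b c g h : monom Phi R) (p q : Phi).

Lemma is_LF_uniq g p q : is_LF g p -> is_LF g q -> p = q.
Proof. by move=> [gp mp] [gq mq]; apply/le_anti; rewrite mq ?mp. Qed.

Lemma mgt1_add g h : mgt1 g -> mgt1 h -> mgt1 (fun x => g x + h x).
Proof.
move=> [p [[gp0 gmax] gp]] [q [[hq0 hmax] hq]].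
case: (ltgtP p q) => [pq|qp|e]; last subst q.
- have gq : g q = 0.
    case: (eqVneq (g q) 0) => // /eqP gq0.
    by have := gmax _ gq0; rewrite leNgt pq.
  exists q; split; last by rewrite gq add0r.
  split; first by rewrite gq add0r.
  move=> x.
  have [gx0|gx0] := eqVneq (g x) 0.
    by rewrite gx0 add0r; apply: hmax.
  by move=> _; apply: le_trans (gmax _ (elimN eqP gx0)) (ltW pq).
- have hp : h p = 0.
    case: (eqVneq (h p) 0) => // /eqP hp0.
    by have := hmax _ hp0; rewrite leNgt qp.
  exists p; split; last by rewrite hp addr0.
  split; first by rewrite hp addr0.
  move=> x.
  have [hx0|hx0] := eqVneq (h x) 0.
    by rewrite hx0 addr0; apply: gmax.
  by move=> _; apply: le_trans (hmax _ (elimN eqP hx0)) (ltW qp).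
- have pos : 0 < g p + h p by rewrite addr_gt0.
  exists p; split=> //; split; first by apply/eqP; rewrite gt_eqF.
  move=> x; have [gx0|gx0] := eqVneq (g x) 0.
    by rewrite gx0 add0r; apply: hmax.
  by move=> _; apply: gmax; apply/eqP.
Qed.

Lemma mgt1_ext g h : (forall x, g x = h x) -> mgt1 g -> mgt1 h.
Proof. by move=> e; have -> : g = h by apply/funext. Qed.

Lemma mlt_trans a b c : mlt a b -> mlt b c -> mlt a c.
Proof.
move=> ab bc; have := mgt1_add bc ab; apply: mgt1_ext => x.
by rewrite /mdiv addrA subrK.
Qed.

Lemma mlt_irr a : ~ mlt a a.
Proof. by move=> [p [[+ _] _]]; rewrite /mdiv subrr. Qed.

Lemma mlt_asym a b : mlt a b -> mlt b a -> False.
Proof. by move=> ab ba; apply: (@mlt_irr a); apply: mlt_trans ab ba. Qed.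

Lemma mle_trans a b c : mle a b -> mle b c -> mle a c.
Proof.
case=> [->//|ab] [<-|bc]; by [right | right; apply: mlt_trans ab bc].
Qed.

Lemma mle_anti a b : mle a b -> mle b a -> a = b.
Proof. by case=> [//|ab] [//|ba]; case: (mlt_asym ab ba). Qed.

Lemma mle_lt_trans a b c : mle a b -> mlt b c -> mlt a c.
Proof. by case=> [->//|ab] bc; apply: mlt_trans ab bc. Qed.

Lemma mlt_le_trans a b c : mlt a b -> mle b c -> mlt a c.
Proof. by move=> ab [<-//|bc]; apply: mlt_trans ab bc. Qed.

Lemma mle_ltF a b : mle a b -> mlt b a -> False.
Proof. by move=> ab ba; apply: (@mlt_irr a); apply: mle_lt_trans ab ba. Qed.

Lemma mtotal a b : awo (fun x y => (x <= y)%O) (msupp (mdiv b a)) ->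
  a = b \/ mlt a b \/ mlt b a.
Proof.
move=> aw; have [e0|ne0] := pselect (msupp (mdiv b a) = set0).
  left; apply/funext => x; apply/eqP; rewrite eq_sym -subr_eq0.
  case: (eqVneq (b x - a x) 0) => // /eqP hne.
  by have : (set0 : set Phi) x by rewrite -e0.
have /set0P ne : msupp (mdiv b a) != set0 by apply/eqP.
have [p Bp pmax] := aw _ (@subset_refl _ _) ne.
right; have [pos|neg] := ltP 0 (mdiv b a p).
  by left; exists p; split => //; split.
right; exists p; split; last first.
  rewrite /mdiv -opprB oppr_gt0 lt_neqAle neg andbT; apply/eqP; exact: Bp.
split; first by rewrite /mdiv -opprB => /eqP; rewrite oppr_eq0 => /eqP; exact: Bp.
move=> x; rewrite /mdiv -opprB => hx; apply: pmax => h0; apply: hx.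
by rewrite /mdiv in h0; rewrite h0 oppr0.
Qed.

End Mon.
Section Seqs.
Context {dP : Order.disp_t} (Phi : orderType dP) (R : realType).

Lemma dec_lt (f : nat -> Phi) : (forall n, (f n.+1 < f n)%O) ->
  forall n m, (n < m)%N -> (f m < f n)%O.
Proof.
move=> hf n; elim=> // m IH; rewrite ltnS leq_eqVlt => /orP[/eqP->|nm].
  exact: hf.
by apply: lt_trans (hf m) (IH nm).
Qed.

Lemma dec_inj (f : nat -> Phi) : (forall n, (f n.+1 < f n)%O) -> injective f.
Proof.
move=> hf n m e; case: (ltngtP n m) => // nm.
  by have := dec_lt hf nm; rewrite e ltxx.
by have := dec_lt hf nm; rewrite e ltxx.
Qed.

Lemma dec_awo (f : nat -> Phi) : (forall n, (f n.+1 < f n)%O) ->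
  awo (fun x y => (x <= y)%O) (range f).
Proof.
move=> hf B BE [b Bb].
have [n0 _ e0] := BE _ Bb.
pose P := fun n => `[< B (f n) >].
have exP : exists n, P n by exists n0; apply/asboolP; rewrite e0.
case: (ex_minnP exP) => m /asboolP Bm mmin.
exists (f m) => // x Bx; have [k _ ek] := BE _ Bx.
have: (m <= k)%N by apply: mmin; apply/asboolP; rewrite ek.
rewrite leq_eqVlt => /orP[/eqP mk|mk]; first by subst k; rewrite ek.
by rewrite -ek; apply/ltW/dec_lt.
Qed.

Lemma inc_lt (f : nat -> monom Phi R) : (forall n, mlt (f n) (f n.+1)) ->
  forall n m, (n < m)%N -> mlt (f n) (f m).
Proof.
move=> hf n; elim=> // m IH; rewrite ltnS leq_eqVlt => /orP[/eqP->|nm].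
  exact: hf.
by apply: mlt_trans (IH nm) (hf m).
Qed.

Lemma inc_le (f : nat -> monom Phi R) : (forall n, mle (f n) (f n.+1)) ->
  forall n m, (n <= m)%N -> mle (f n) (f m).
Proof.
move=> hf n; elim=> [|m IH]; first by rewrite leqn0 => /eqP->; left.
rewrite leq_eqVlt => /orP[/eqP->|nm]; first by left.
by apply: mle_trans (IH nm) (hf m).
Qed.

Lemma extract (E : set Phi) (psi : nat -> Phi) :
  awo (fun x y => (x <= y)%O) E -> (forall n, E (psi n)) ->
  (forall v, exists b, forall n, psi n = v -> (n < b)%N) ->
  exists sigma : nat -> nat, (forall j, (sigma j < sigma j.+1)%N) /\
    (forall j, (psi (sigma j.+1) < psi (sigma j))%O).
Proof.
move=> aw Epsi hb.
have hM : forall k, exists n, (k <= n)%N /\ forall n', (k <= n')%N -> (psi n' <= psi n)%O.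
  move=> k.
  have sub : [set x | exists2 n, (k <= n)%N & psi n = x] `<=` E.
    by move=> x [n _ <-].
  have ne : [set x | exists2 n, (k <= n)%N & psi n = x] !=set0.
    by exists (psi k); exists k.
  have [x [n kn <-] xmax] := aw _ sub ne.
  by exists n; split => // n' kn'; apply: xmax; exists n'.
have [M HM] := choice hM.
have [Bd HB] := choice hb.
pose k := fix k j := if j is j'.+1 then Bd (psi (M (k j'))) else 0%N.
exists (fun j => M (k j)).
have step : forall j, (M (k j) < M (k j.+1))%N.
  move=> j; have := (HM (k j.+1)).1; apply: leq_trans.
  by apply: HB.
split=> // j; rewrite lt_neqAle; apply/andP; split; last first.
  by apply: (HM (k j)).2; apply: leq_trans (ltnW (step j)); exact: (HM (k j)).1.
apply/eqP => e.
have := HB (psi (M (k j))) (M (k j.+1)) e.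
by rewrite ltnNge (HM (k j.+1)).1.
Qed.

End Seqs.
Section Main.
Context {dP : Order.disp_t} (Phi : orderType dP) (R : realType).
Variables (Gam : set (monom Phi R)) (l : Phi -> series Phi R).
Hypothesis HG : hahn_subgroup Gam.
Hypothesis Hl : forall phi, in_Kgt1 Gam (l phi) /\ l phi <> (fun _ => 0).

Lemma G_awo a : Gam a -> awo (fun x y => (x <= y)%O) (msupp a).
Proof. by case: HG => h _; apply: h. Qed.
Lemma G_div a b : Gam a -> Gam b -> Gam (mdiv a b).
Proof. by case: HG => _ [_ [h _]]; apply: h. Qed.
Lemma G_fund p : Gam (fund R p).
Proof. by case: HG => _ [_ [_ h]]; apply: h. Qed.
Lemma G_0 : Gam (fun _ => 0).
Proof. by case: HG => _ [h _]. Qed.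

Lemma Gtot a b : Gam a -> Gam b -> a = b \/ mlt a b \/ mlt b a.
Proof. by move=> Ga Gb; apply: mtotal; apply: G_awo; apply: G_div. Qed.

Lemma l_supp p m : l p m <> 0 -> Gam m.
Proof. by case: (Hl p) => [[[h _] _] _]; apply: h. Qed.
Lemma l_awo p : awo (@mle _ Phi R) (Supp (l p)).
Proof. by case: (Hl p) => [[[_ h] _] _]. Qed.
Lemma l_gt1 p m : l p m <> 0 -> mgt1 m.
Proof. by case: (Hl p) => [[_ h] _]; apply: h. Qed.

Lemma LM_uniq (s : series Phi R) mu nu : is_LM s mu -> is_LM s nu -> mu = nu.
Proof. by move=> [s1 h1] [s2 h2]; apply: mle_anti; [apply: h2|apply: h1]. Qed.

Lemma LM_ex p : exists mu, is_LM (l p) mu.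
Proof.
have ne : Supp (l p) !=set0.
  apply: contra_notP (Hl p).2 => hn; apply/funext => m.
  by case: (eqVneq (l p m) 0) => // /eqP h; case: hn; exists m.
have [mu Smu mmax] := l_awo (@subset_refl _ _) ne.
by exists mu; split.
Qed.

Lemma part1a : extends_series_morphism l -> ~ HL1 Gam l.
Proof.
move=> ext [phin [lam [hdec [hinc hl]]]].
have [aw fin] := ext _ (dec_awo hdec).
have sub : range lam `<=` [set m | exists2 i, range phin i & l i m <> 0].
  by move=> _ [n _ <-]; exists (phin n); [exists n | exact: (hl n).2].
have [_ [k _ <-] kmax] := aw _ sub (ex_intro _ (lam 0%N) (ex_intro2 _ _ 0%N I erefl)).
have eqk : forall n, (k <= n)%N -> lam n = lam k.
  move=> n kn; apply: mle_anti; first by apply: kmax; exists n.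
  idtac.
have := @inc_le _ _ _ lam hinc k n kn. exact.
apply: (inj_infinite (f := fun n => phin (n + k)%N)) (fin (lam k)).
  move=> n; split; first by exists (n + k)%N.
  by rewrite -(eqk (n + k)%N) ?leq_addl //; exact: (hl _).2.
by move=> i j /(dec_inj hdec) /addIn.
Qed.

Lemma part1b : ~ HL1 Gam l -> extends_series_morphism l.
Proof.
move=> nHL E aw; split; last first.
  move=> m; apply: contrapT => /infinite_inj [psi [Fpsi injpsi]].
  have hb : forall v, exists b, forall n, psi n = v -> (n < b)%N.
    move=> v; have [[n0 e0]|ne] := pselect (exists n, psi n = v).
      by exists n0.+1 => n e; rewrite ltnS; rewrite -e0 in e; rewrite (injpsi _ _ e).
    by exists 0%N => n e; case: ne; exists n.
  have [sigma [_ hs]] := extract aw (fun n => (Fpsi n).1) hb.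
  apply: nHL; exists (fun j => psi (sigma j)), (fun _ => m); split=> //.
  split=> [n|n]; first by left.
  by split; [exact: (l_supp (Fpsi 0%N).2) | exact: (Fpsi _).2].
move=> B BU [b0 Bb0]; apply: contrapT => nmax.
have Utot : forall x y, B x -> B y -> x = y \/ mlt x y \/ mlt y x.
  move=> x y Bx By; apply: Gtot.
    by have [i _ /l_supp] := BU _ Bx.
  by have [i _ /l_supp] := BU _ By.
have hnext : forall x, exists y, B x -> B y /\ mlt x y.
  move=> x; have [Bx|nBx] := pselect (B x); last by exists x.
  apply: contrapT => hn; apply: nmax; exists x => // y By.
  have [->|[xy|yx]] := Utot _ _ Bx By; [by left | | by right].
  by case: hn; exists y.
have [nxt Hnxt] := choice hnext.
pose lam := fun n => iter n nxt b0.
have Blam : forall n, B (lam n).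
  by elim=> [|n IH] //=; exact: (Hnxt _ IH).1.
have lamS : forall n, mlt (lam n) (lam n.+1).
  by move=> n; exact: (Hnxt _ (Blam n)).2.
have [i0 Ei0 _] := BU _ Bb0.
have hpsi : forall m, exists i, [set m | exists2 i, E i & l i m <> 0] m ->
    E i /\ l i m <> 0.
  move=> m; have [[i Ei hi]|nU] := pselect ([set m | exists2 i, E i & l i m <> 0] m).
    by exists i.
  by exists i0.
have [psi Hpsi] := choice hpsi.
have Epsi : forall n, E (psi (lam n)) /\ l (psi (lam n)) (lam n) <> 0.
  by move=> n; apply: Hpsi; apply: BU.
have [[v hv]|nrep] := pselect (exists v, forall b, exists n, (b <= n)%N /\ psi (lam n) = v).
  have sub : [set x | exists2 n, psi (lam n) = v & lam n = x] `<=` Supp (l v).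
    by move=> _ [n <- <-]; exact: (Epsi n).2.
  have [n1 [_ e1]] := hv 0%N.
  have [_ [n e <-] xmax] := l_awo sub (ex_intro _ (lam n1) (ex_intro2 _ _ n1 e1 erefl)).
  have [n2 [n2n e2]] := hv n.+1.
  have := xmax (lam n2) (ex_intro2 _ _ n2 e2 erefl).
  by move/mle_ltF; apply; apply: inc_lt.
have hb : forall w, exists b, forall n, psi (lam n) = w -> (n < b)%N.
  move=> w; apply: contrapT => hn; apply: nrep; exists w => b.
  apply: contrapT => hb; apply: hn; exists b => n e.
  by rewrite ltnNge; apply/negP => bn; apply: hb; exists n.
have [sigma [hs1 hs2]] := extract aw (fun n => (Epsi n).1) hb.
apply: nHL; exists (fun j => psi (lam (sigma j))), (fun j => lam (sigma j)).
split=> //; split=> [j|j]; first by right; apply: inc_lt.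
split; last exact: (Epsi _).2.
by have [i _ /l_supp] := BU _ (Blam (sigma j)).
Qed.


Lemma awo_sub {T} (r : T -> T -> Prop) (A B : set T) : awo r B -> A `<=` B -> awo r A.
Proof. by move=> aw AB C CA; apply: aw; apply: subset_trans CA AB. Qed.

Lemma awoU (A B : set Phi) : awo (fun x y => (x <= y)%O) A ->
  awo (fun x y => (x <= y)%O) B -> awo (fun x y => (x <= y)%O) (A `|` B).
Proof.
move=> hA hB C CAB [c Cc].
case: (pselect (C `&` A !=set0)) => [nA|nA]; case: (pselect (C `&` B !=set0)) => [nB|nB].
- have [x [Cx _] xm] := hA _ (@subIsetr _ _ _) nA.
  have [y [Cy _] ym] := hB _ (@subIsetr _ _ _) nB.
  case: (leP x y) => xy.
    exists y => // z Cz; case: (CAB _ Cz) => hz; last by apply: ym.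
    by apply: le_trans xy; apply: xm.
  exists x => // z Cz; case: (CAB _ Cz) => hz; first by apply: xm.
  by apply: le_trans (ltW xy); apply: ym.
- have [x [Cx _] xm] := hA _ (@subIsetr _ _ _) nA.
  exists x => // z Cz; case: (CAB _ Cz) => hz; first by apply: xm.
  by case: nB; exists z.
- have [y [Cy _] ym] := hB _ (@subIsetr _ _ _) nB.
  exists y => // z Cz; case: (CAB _ Cz) => hz; last by apply: ym.
  by case: nA; exists z.
- by case: (CAB _ Cc) => hc; [case: nA | case: nB]; exists c.
Qed.

Lemma lext_nz a m : lext l a m <> 0 -> exists p, a p <> 0 /\ l p m <> 0.
Proof.
move=> h; apply: contrapT => hn; apply: h; rewrite /lext; apply: fsbig1 => p ap.
case: (eqVneq (l p m) 0) => [->|/eqP lp]; first by rewrite mulr0.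
by case: hn; exists p.
Qed.

Lemma lext_only a m q : (forall p, p <> q -> a p * l p m = 0) ->
  lext l a m = a q * l q m.
Proof.
rewrite /lext => h; case: (eqVneq (a q) 0) => [aq0|aq].
  rewrite aq0 mul0r; apply: fsbig1 => p ap; apply: h => epq.
  by apply: ap; rewrite epq.
rewrite -(fsbig_widen [set q] (msupp a)) ?fsbig_set1 //.
  by move=> _ ->; apply/eqP.
by move=> p [_ npq]; apply: h.
Qed.

Lemma lext_add a b m :
  finite_set [set p | (msupp a `|` msupp b) p /\ l p m <> 0] ->
  lext l (fun x => a x + b x) m = lext l a m + lext l b m.
Proof.
set D := msupp a `|` msupp b; set F := [set p | D p /\ l p m <> 0] => finF.
have toF : forall c, msupp c `<=` D -> lext l c m = \sum_(p \in F) c p * l p m.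
  move=> c cD; rewrite /lext (fsbig_widen (msupp c) D) //; last first.
    move=> p [_ /= ncp]; have -> : c p = 0 by apply: contrapT.
    by rewrite mul0r.
  rewrite -(fsbig_widen F D) //; first by move=> p [].
  move=> p [Dp nF] /=; have -> : l p m = 0.
    by apply: contrapT => h; apply: nF.
  by rewrite mulr0.
have sa : msupp a `<=` D by move=> p hp; left.
have sb : msupp b `<=` D by move=> p hp; right.
have sab : msupp (fun x => a x + b x) `<=` D.
  move=> p /= hp; case: (eqVneq (a p) 0) => [a0|/eqP a0]; last by left.
  by right; rewrite /msupp /= a0 add0r in hp.
rewrite (toF _ sa) (toF _ sb) (toF _ sab).
rewrite -fsbig_split //; apply: eq_fsbigr => p _; by rewrite mulrDl.
Qed.

Lemma lext_add_G a b m : extends_series_morphism l -> Gam a -> Gam b ->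
  lext l (fun x => a x + b x) m = lext l a m + lext l b m.
Proof.
move=> ext Ga Gb; apply: lext_add.
by have [_ fin] := ext _ (awoU (G_awo Ga) (G_awo Gb)); apply: fin.
Qed.

Lemma lext_fund p : lext l (fund R p) = l p.
Proof.
apply/funext => m; rewrite (@lext_only _ _ p) /fund ?eqxx ?mul1r //.
by move=> q qp; rewrite ifN ?mul0r //; apply/eqP.
Qed.

Lemma lext_0 : lext l (fun _ => 0) = (fun _ => 0).
Proof. by apply/funext => m; rewrite /lext; apply: fsbig1 => p hp; case: hp. Qed.

Lemma lext_diff
  (Hadd : forall a b, Gam a -> Gam b -> forall m,
     lext l (fun x => a x + b x) m = lext l a m + lext l b m) a b m :
  Gam a -> Gam b -> lext l (mdiv b a) m = lext l b m - lext l a m.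
Proof.
move=> Ga Gb; have := Hadd a (mdiv b a) Ga (G_div Gb Ga) m.
have -> : (fun x => a x + mdiv b a x) = b.
  by apply/funext => x; rewrite /mdiv addrC subrK.
by move=> ->; rewrite addrAC subrr add0r.
Qed.

Lemma LMext (P1 : forall p, spos (l p))
  (P2 : forall p q, (p < q)%O -> sprec (l p) (l q)) c p0 mu0 :
  is_LF c p0 -> 0 < c p0 -> is_LM (l p0) mu0 ->
  is_LM (lext l c) mu0 /\ 0 < lext l c mu0.
Proof.
move=> [cp0 cmax] cpos [lp0 lmax].
have below : forall p, (p < p0)%O -> forall nu, l p nu <> 0 -> mlt nu mu0.
  move=> p pp0 nu hnu; have [ma [mb [Ha [Hb hab]]]] := P2 _ _ pp0.
  rewrite -(LM_uniq Hb (conj lp0 lmax)); apply: mle_lt_trans hab.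
  exact: Ha.2 _ hnu.
have le0 : forall p nu, c p <> 0 -> l p nu <> 0 -> mle nu mu0.
  move=> p nu cp hnu; have := cmax _ cp; rewrite le_eqVlt => /orP[/eqP e|pp0].
    by rewrite e in hnu; apply: lmax.
  by right; apply: below pp0 _ hnu.
have val : lext l c mu0 = c p0 * l p0 mu0.
  apply: lext_only => p np.
  case: (eqVneq (c p) 0) => [->|/eqP cp]; first by rewrite mul0r.
  have pp0 : (p < p0)%O by rewrite lt_neqAle (cmax _ cp) andbT; apply/eqP.
  case: (eqVneq (l p mu0) 0) => [->|/eqP h]; first by rewrite mulr0.
  by case: (mlt_irr (below _ pp0 _ h)).
have lpos : 0 < l p0 mu0.
  by have [mu [hmu pos]] := P1 p0; rewrite -(LM_uniq hmu (conj lp0 lmax)).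
have pos : 0 < lext l c mu0 by rewrite val mulr_gt0.
split=> //; split; first by move=> h; move: pos; rewrite h ltxx.
by move=> nu /lext_nz [p [cp hp]]; exact: le0 cp hp.
Qed.

Lemma part2b : extends_series_morphism l -> (forall p, spos (l p)) ->
  (forall p q, (p < q)%O -> sprec (l p) (l q)) -> prelog_section Gam (lext l).
Proof.
move=> ext P1 P2.
have Hadd : forall a b, Gam a -> Gam b -> forall m,
    lext l (fun x => a x + b x) m = lext l a m + lext l b m.
  by move=> a b Ga Gb m; apply: lext_add_G.
have posc : forall c, Gam c -> mgt1 c ->
    exists mu, is_LM (lext l c) mu /\ 0 < lext l c mu.
  move=> c Gc [p0 [hLF cpos]]; have [mu0 hmu] := LM_ex p0.
  by have [h1 h2] := LMext P1 P2 hLF cpos hmu; exists mu0.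
split; [|split; [|split]].
- move=> a Ga; have [aw _] := ext _ (G_awo Ga); split; [split|].
  + by move=> m /lext_nz [p [_ hp]]; exact: l_supp hp.
  + apply: (awo_sub (A:=Supp (lext l a)) aw) => m /lext_nz [p [ap hp]].
    by exists p.
  + by move=> m /lext_nz [p [_ hp]]; exact: l_gt1 hp.
- by move=> a b Ga Gb; apply/funext => m; exact: Hadd.
- move=> a b Ga Gb e; have [//|[ab|ba]] := Gtot Ga Gb.
  + have [mu [[nz _] _]] := posc _ (G_div Gb Ga) ab.
    by case: nz; rewrite lext_diff // e subrr.
  + have [mu [[nz _] _]] := posc _ (G_div Ga Gb) ba.
    by case: nz; rewrite lext_diff // e subrr.
- move=> a b Ga Gb [->|ab]; first by left.
  right; rewrite /slt; have := posc _ (G_div Gb Ga) ab.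
  have -> : (fun m => lext l b m - lext l a m) = lext l (mdiv b a).
    by apply/funext => m; rewrite lext_diff.
  by [].
Qed.


Lemma neg_contra (s : series Phi R) mu : s mu < 0 ->
  (forall nu, s nu <> 0 -> mle nu mu) -> sle (fun _ => 0) s -> False.
Proof.
move=> neg hmax [e|[mu' [[nz hm'] pos]]].
  by have := congr1 (fun f => f mu) e => /= h; move: neg; rewrite -h ltxx.
rewrite /= subr0 in nz pos.
have h1 : mle mu mu' by apply: hm' => /=; rewrite subr0; apply/eqP; rewrite ltr0_neq0.
have h2 := hmax _ nz.
by move: pos; rewrite (mle_anti h2 h1) ltNge ltW.
Qed.

Lemma mgt1_fund (p : Phi) : mgt1 (fund R p).
Proof.
exists p; split; [split|]; rewrite /fund /= ?eqxx //.
  by apply/eqP; exact: oner_neq0.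
by move=> q; case: eqP => [->|] //.
Qed.

Lemma part2a : prelog_section Gam (lext l) ->
  (forall p, spos (l p)) /\ (forall p q, (p < q)%O -> sprec (l p) (l q)).
Proof.
move=> [pin [padd [pinj pord]]].
have Hadd : forall a b, Gam a -> Gam b -> forall m,
    lext l (fun x => a x + b x) m = lext l a m + lext l b m.
  by move=> a b Ga Gb m; rewrite (padd a b Ga Gb).
have sle0 : forall a, Gam a -> mgt1 a -> sle (fun _ => 0) (lext l a).
  move=> a Ga ha; rewrite -lext_0; apply: pord => //; first exact: G_0.
  by right; apply: (mgt1_ext _ ha) => x; rewrite /mdiv subr0.
have P1 : forall p, spos (l p).
  move=> p; have := sle0 _ (G_fund p) (mgt1_fund p); rewrite lext_fund.
  case=> [e|]; first by case: (Hl p).2.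
  by rewrite /slt; have -> : (fun m => l p m - 0) = l p by apply/funext=> m; rewrite subr0.
split=> // p q pq.
pose g := fun n : nat => fun x => fund R q x - n%:R * fund R p x.
have gS : forall n, g n.+1 = mdiv (g n) (fund R p).
  by move=> n; apply/funext => x; rewrite /g /mdiv -natr1 mulrDl mul1r opprD addrA.
have Gg : forall n, Gam (g n).
  elim=> [|n IH]; last by rewrite gS; apply: G_div => //; exact: G_fund.
  have -> : g 0%N = fund R q by apply/funext => x; rewrite /g mul0r subr0.
  exact: G_fund.
have Lg : forall n m, lext l (g n) m = l q m - n%:R * l p m.
  elim=> [|n IH] m.
    have -> : g 0%N = fund R q by apply/funext => x; rewrite /g mul0r subr0.
    by rewrite lext_fund mul0r subr0.
  rewrite gS lext_diff //; last exact: G_fund.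
  by rewrite IH lext_fund -natr1 mulrDl mul1r opprD addrA.
have pq' : p != q by rewrite lt_eqF.
have mg : forall n, mgt1 (g n).
  move=> n; exists q.
  have fpq : fund R p q = 0 by rewrite /fund ifN // eq_sym.
  have fqq : fund R q q = 1 by rewrite /fund eqxx.
  have gq : g n q = 1 by rewrite /g fpq fqq mulr0 subr0.
  split; [split|]; rewrite ?gq //; first by apply/eqP; exact: oner_neq0.
  move=> x; rewrite /g /fund; case: (eqVneq x q) => [->//|xq].
  case: (eqVneq x p) => [->|xp]; first by move=> _; exact: ltW.
  by rewrite ?(negbTE xq) ?(negbTE xp) mulr0 subrr.
have [mp hp] := LM_ex p; have [mq hq] := LM_ex q.
have Gmp : Gam mp by exact: l_supp hp.1.
have Gmq : Gam mq by exact: l_supp hq.1.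
have cpos : 0 < l p mp by have [mu [hmu pos]] := P1 p; rewrite -(LM_uniq hmu hp).
have [lt|qle] : mlt mp mq \/ mle mq mp.
  case: (Gtot Gmp Gmq) => [e|[lt|gt]]; [by right; left; rewrite e | by left | by right; right].
  by exists mp, mq.
pose x := `|l q mp| / l p mp.
have x0 : 0 <= x by rewrite divr_ge0 // ltW.
have := archi_boundP x0; set n := Num.bound x => hn.
have neg : lext l (g n) mp < 0.
  rewrite Lg subr_lt0; apply: le_lt_trans (ler_norm _) _.
  by rewrite -ltr_pdivrMr.
exfalso; apply: (neg_contra neg _ (sle0 _ (Gg n) (mg n))).
move=> nu; rewrite Lg => hnu.
case: (eqVneq (l p nu) 0) => [p0|/eqP p0]; last exact: hp.2.
rewrite p0 mulr0 subr0 in hnu; apply: mle_trans qle; exact: hq.2.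
Qed.


Lemma part3 : prelog_section Gam (lext l) ->
  (GA Gam (lext l) <->
   (forall phi, exists mu psi, is_LM (l phi) mu /\ is_LF mu psi /\ (psi < phi)%O)).
Proof.
move=> pl; have [P1 P2] := part2a pl; split.
- move=> ga p; have [mu hmu] := LM_ex p.
  have Gmu : Gam mu by exact: l_supp hmu.1.
  have [q [hq qpos]] := l_gt1 hmu.1.
  exists mu, q; split=> //; split=> //.
  rewrite ltNge; apply/negP => pq.
  have [nu [hnu nmu]] := ga mu Gmu (ex_intro _ q (conj hq qpos)).
  have [nu' hnu'] := LM_ex q.
  have [hL _] := LMext P1 P2 hq qpos hnu'.
  rewrite (LM_uniq hnu hL) in nmu.
  move: pq; rewrite le_eqVlt => /orP[/eqP e|lt].
    by rewrite -e in hnu'; rewrite (LM_uniq hnu' hmu) in nmu; apply: (mlt_irr nmu).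
  have [ma [mb [Ha [Hb hab]]]] := P2 _ _ lt.
  rewrite (LM_uniq Ha hmu) (LM_uniq Hb hnu') in hab.
  exact: mlt_asym hab nmu.
- move=> H a Ga [p0 [hLF apos]].
  have [mu [psi [hmu [hpsi lt]]]] := H p0.
  have [hL _] := LMext P1 P2 hLF apos hmu.
  exists mu; split=> //.
  have mu0 : mu p0 = 0.
    case: (eqVneq (mu p0) 0) => // /eqP h.
    by have := hpsi.2 _ h; rewrite leNgt lt.
  exists p0; split; last by rewrite /mdiv /= mu0 subr0.
  split; first by rewrite /mdiv /= mu0 subr0 => h; move: apos; rewrite h ltxx.
  move=> x; rewrite /mdiv /=; case: (eqVneq (a x) 0) => [ax|/eqP ax _]; last exact: hLF.2.
  rewrite ax sub0r => hx; apply: ltW; apply: le_lt_trans lt.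
  by apply: hpsi.2 => h; apply: hx; rewrite h oppr0.
Qed.

End Main.

Theorem mainTheorem1 (dP : Order.disp_t) (Phi : orderType dP) (R : realType)
    (Gam : set (monom Phi R)) (l : Phi -> series Phi R) :
  hahn_subgroup Gam ->
  (forall phi, in_Kgt1 Gam (l phi) /\ l phi <> (fun _ => 0)) ->
  (extends_series_morphism l <-> ~ HL1 Gam l) /\
  (extends_series_morphism l ->
     (prelog_section Gam (lext l) <->
        ((forall phi, spos (l phi)) /\
         (forall phi psi, (phi < psi)%O -> sprec (l phi) (l psi))))) /\
  (extends_series_morphism l -> prelog_section Gam (lext l) ->
     (GA Gam (lext l) <->
        (forall phi, exists mu psi, is_LM (l phi) mu /\ is_LF mu psi /\ (psi < phi)%O))).
Proof.
move=> HG Hl; split; [split|split].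
- exact: part1a.
- exact: (part1b HG Hl).
- move=> ext; split; first exact: (part2a HG Hl).
  by move=> [P1 P2]; apply: (part2b HG Hl).
- by move=> ext pl; apply: (part3 HG Hl).
Qed.
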